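(* Let $\beta<1$. Then there exist $\delta_1,\delta_2,\delta_3>0$ (used to define $A_n$ and $B_n$), $\delta_\beta>0$ and a constant $C<\infty$ such that for all sufficiently large $n$, almost surely (i.e. uniformly over the realisation of the skeleton $(Y_k)$), $$\mathbb{P}(A_n\setminus B_n\mid\mathcal{F})\le C\,n^{-\delta_\beta}.$$
   Context: Setup. On one probability space $(\Omega,\mathcal{A},\mathbb{P})$ let: $(Y_n)_{n\ge0}$ be a simple symmetric random walk on $\mathbb{Z}$ with $Y_0=0$; and $\varepsilon=(\varepsilon_y)_{y\in\mathbb{Z}}$ be the environment of the randomly horizontally directed lattice with randomness decaying in power $\beta$: $Q\ge2$ even, $f:\mathbb{Z}\to\{-1,1\}$ $Q$-periodic with $\sum_{y=1}^Q f(y)=0$, $(\rho_y)$ i.i.d. uniform on $\{-1,1\}$, $(\lambda_y)$ independent $\{0,1\}$-valued, independent of $(\rho_y)$, with $\mathbb{P}(\lambda_y=1)=c_0|y|^{-\beta}$ for all sufficiently large $|y|$ (some constant $c_0>0$), and $\varepsilon_y=(1-\lambda_y)f(y)+\lambda_y\rho_y$; $(Y_n)$ is independent of $(\lambda_y,\rho_y)$. Let $\eta_n(y)=\sum_{k=0}^n\mathbf 1_{\{Y_k=y\}}$ and $\mathcal{F}=\sigma(Y_k:k\ge0)$. For $\delta_1,\delta_2,\delta_3>0$ let $A_{n,1}=\{\max_{0\le k\le 2n}|Y_k|<n^{1/2+\delta_1}\}$, $A_{n,2}=\{\max_{y}\eta_{2n-1}(y)<n^{1/2+\delta_2}\}$,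 $A_n=A_{n,1}\cap A_{n,2}$, and $B_n=A_n\cap\{|\sum_{y}\varepsilon_y\eta_{2n-1}(y)|>n^{1/2+\delta_3}\}$. *)

(* Defs.v *)
From Stdlib Require Import Reals Lra ZArith List.
Open Scope R_scope.

(** A (realisation of the) skeleton: a nearest-neighbour path on Z from 0.
    Every finite nearest-neighbour path has positive probability under the
    simple symmetric random walk, so "almost surely" over F means "for every
    such path". *)
Definition nn_path (Y : nat -> Z) : Prop :=
  Y 0%nat = 0%Z /\ forall k : nat, Z.abs (Y (S k) - Y k) = 1%Z.

Definition eta (Y : nat -> Z) (m : nat) (y : Z) : nat :=
  length (filter (fun k => Z.eqb (Y k) y) (seq 0 (S m))).

Definition eta2n (Y : nat -> Z) (n : nat) (y : Z) : nat := eta Y (2 * n - 1) y.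

(** The sites that the path can visit up to time 2n: [-2n, 2n]. *)
Definition window (n : nat) : list Z :=
  map (fun i => (Z.of_nat i - Z.of_nat (2 * n))%Z) (seq 0 (S (4 * n))).

Definition Rltb (x y : R) : bool := if Rlt_dec x y then true else false.
Definition Rleb (x y : R) : bool := if Rle_dec x y then true else false.

Definition A_n1 (Y : nat -> Z) (n : nat) (d1 : R) : bool :=
  forallb (fun k => Rltb (IZR (Z.abs (Y k))) (Rpower (INR n) (/2 + d1)))
          (seq 0 (S (2 * n))).

(** A_{n,2} = { max_y eta_{2n-1}(y) < n^{1/2+d2} } (eta vanishes outside the window) *)
Definition A_n2 (Y : nat -> Z) (n : nat) (d2 : R) : bool :=
  forallb (fun y => Rltb (INR (eta2n Y n y)) (Rpower (INR n) (/2 + d2)))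
          (window n).

Definition A_n (Y : nat -> Z) (n : nat) (d1 d2 : R) : bool :=
  A_n1 Y n d1 && A_n2 Y n d2.

Definition upd (e : Z -> Z) (y v : Z) : Z -> Z :=
  fun z => if Z.eqb z y then v else e z.

(** Expectation of G(eps) over the environment eps restricted to the
    (duplicate-free) list of sites ys, where independently for each y:
    with prob. p y, lambda_y = 1 and eps_y = rho_y uniform in {-1,1};
    with prob. 1 - p y, lambda_y = 0 and eps_y = f y. *)
Fixpoint env_expect (p : Z -> R) (f : Z -> Z) (ys : list Z)
  (G : (Z -> Z) -> R) : R :=
  match ys with
  | nil => G f
  | y :: ys' =>
      p y * (/2 * env_expect p f ys' (fun e => G (upd e y 1%Z))
             + /2 * env_expect p f ys' (fun e => G (upd e y (-1)%Z)))
      + (1 - p y) * env_expect p f ys' (fun e => G (upd e y (f y)))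
  end.

Definition Ssum (Y : nat -> Z) (n : nat) (e : Z -> Z) : R :=
  fold_right Rplus 0 (map (fun y => IZR (e y) * INR (eta2n Y n y)) (window n)).

(** P(A_n \ B_n | F) evaluated at the skeleton realisation Y
    (environment independent of Y):
    1_{A_n} * P_env( |sum_y eps_y eta_{2n-1}(y)| <= n^{1/2+d3} ). *)
Definition cond_prob_AnBn (p : Z -> R) (f : Z -> Z) (Y : nat -> Z) (n : nat)
  (d1 d2 d3 : R) : R :=
  (if A_n Y n d1 d2 then 1 else 0) *
  env_expect p f (window n)
    (fun e => if Rleb (Rabs (Ssum Y n e)) (Rpower (INR n) (/2 + d3)) then 1 else 0).

(* Main.v *)
Require Import Defs.
From Stdlib Require Import Reals Lra Lia ZArith List Permutation Bool.
Open Scope R_scope.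

Fixpoint EE (L : list (R*R)) (F : R -> R) (c : R) : R :=
  match L with
  | nil => F c
  | (q,d)::L' => q * EE L' F (c + d) + (1 - q) * EE L' F c
  end.

Lemma EE_ext L : forall F G c, (forall x, F x = G x) -> EE L F c = EE L G c.
Proof. induction L as [|[q d] L IH]; intros F G c H; simpl; auto.
  rewrite (IH F G (c+d) H), (IH F G c H); auto. Qed.

Lemma EE_arg L F c c' : c = c' -> EE L F c = EE L F c'.
Proof. intros ->; auto. Qed.

Lemma EE_app L1 : forall L2 F c, EE (L1 ++ L2) F c = EE L1 (EE L2 F) c.
Proof. induction L1 as [|[q d] L IH]; intros; simpl; auto. rewrite !IH; auto. Qed.

Lemma EE_swap a b L F c : EE (a::b::L) F c = EE (b::a::L) F c.
Proof. destruct a as [q1 d1], b as [q2 d2]; simpl.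
  rewrite (EE_arg L F (c+d1+d2) (c+d2+d1)) by ring. ring. Qed.

Lemma EE_perm L1 L2 : Permutation L1 L2 -> forall F c, EE L1 F c = EE L2 F c.
Proof. induction 1; intros; auto.
  - destruct x as [q d]; simpl; rewrite !IHPermutation; auto.
  - apply EE_swap.
  - rewrite IHPermutation1; auto. Qed.

Definition probs_ok (L : list (R*R)) := forall qd, In qd L -> 0 <= fst qd <= 1.

Lemma EE_mono L : probs_ok L -> forall F G c, (forall x, F x <= G x) -> EE L F c <= EE L G c.
Proof. induction L as [|[q d] L IH]; intros Hok F G c H; simpl; auto.
  assert (Hq := Hok (q,d) (or_introl eq_refl)); simpl in Hq.
  assert (Hok' : probs_ok L) by (intros x Hx; apply Hok; right; auto).
  specialize (IH Hok' F G). pose proof (IH (c+d) H). pose proof (IH c H). nra. Qed.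

Lemma EE_const L : forall B c, EE L (fun _ => B) c = B.
Proof. induction L as [|[q d] L IH]; intros; simpl; auto. rewrite !IH; ring. Qed.

Lemma EE_le_sup L : probs_ok L -> forall F B c, (forall x, F x <= B) -> EE L F c <= B.
Proof. intros Hok F B c H. rewrite <- (EE_const L B c). apply EE_mono; auto. Qed.

Lemma env_ext p f ys : forall G1 G2, (forall e, G1 e = G2 e) ->
  env_expect p f ys G1 = env_expect p f ys G2.
Proof. induction ys as [|y ys IH]; intros G1 G2 H; simpl; auto.
  rewrite (IH (fun e => G1 (upd e y 1%Z)) (fun e => G2 (upd e y 1%Z))) by auto.
  rewrite (IH (fun e => G1 (upd e y (-1)%Z)) (fun e => G2 (upd e y (-1)%Z))) by auto.
  rewrite (IH (fun e => G1 (upd e y (f y))) (fun e => G2 (upd e y (f y)))) by auto.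
  auto. Qed.

Definition sumL {A} (L : list A) (g : A -> R) : R := fold_right Rplus 0 (map g L).

Lemma sumL_ext_in {A} (L : list A) g h : (forall x, In x L -> g x = h x) -> sumL L g = sumL L h.
Proof. induction L; intros H; simpl; auto. unfold sumL in *; simpl. rewrite H by (left; auto).
  rewrite IHL; auto. intros; apply H; right; auto. Qed.

Lemma bridge p f (a : Z -> R) (F : R -> R) L :
  NoDup L -> (forall y, f y = 1%Z \/ f y = (-1)%Z) ->
  forall c,
  env_expect p f L (fun e => F (c + sumL L (fun y => IZR (e y) * a y)))
  = EE (map (fun y => (p y / 2, -2 * IZR (f y) * a y)) L) F
       (c + sumL L (fun y => IZR (f y) * a y)).
Proof.
  intros Hnd Hf. induction L as [|y L IH]; intros c; simpl; auto.
  inversion Hnd as [|y' L' Hny HndL]; subst.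
  assert (Hup : forall e v, sumL L (fun z => IZR (upd e y v z) * a z) = sumL L (fun z => IZR (e z) * a z)).
  { intros e v; apply sumL_ext_in; intros z Hz; unfold upd.
    destruct (Z.eqb_spec z y); [subst; contradiction | auto]. }
  assert (Hy : forall e v, upd e y v y = v) by (intros; unfold upd; rewrite Z.eqb_refl; auto).
  assert (HG : forall v, env_expect p f L
     (fun e => F (c + sumL (y :: L) (fun y0 => IZR (upd e y v y0) * a y0)))
     = EE (map (fun y0 => (p y0 / 2, -2 * IZR (f y0) * a y0)) L) F
          ((c + IZR v * a y) + sumL L (fun y0 => IZR (f y0) * a y0))).
  { intros v. rewrite <- IH by auto. apply env_ext; intros e.
    unfold sumL at 1; simpl. fold (sumL L (fun y0 => IZR (upd e y v y0) * a y0)).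
    rewrite Hup, Hy. f_equal; ring. }
  rewrite !HG.
  assert (Hc : sumL (y :: L) (fun y0 => IZR (f y0) * a y0) = IZR (f y) * a y + sumL L (fun y0 => IZR (f y0) * a y0)) by reflexivity.
  rewrite Hc.
  set (S := sumL L (fun y0 => IZR (f y0) * a y0)).
  set (E := EE (map (fun y0 => (p y0 / 2, -2 * IZR (f y0) * a y0)) L) F).
  destruct (Hf y) as [H|H]; rewrite H; simpl.
  - replace (c + -1 * a y + S) with (c + (1 * a y + S) + -2 * 1 * a y) by ring.
    replace (c + 1 * a y + S) with (c + (1 * a y + S)) by ring. field.
  - replace (c + 1 * a y + S) with (c + (-1 * a y + S) + -2 * -1 * a y) by ring.
    replace (c + -1 * a y + S) with (c + (-1 * a y + S)) by ring. field.
Qed.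

Fixpoint EBc (rs : list R) (g : nat -> R) (k : nat) : R :=
  match rs with nil => g k | r :: rs' => r * EBc rs' g (S k) + (1 - r) * EBc rs' g k end.

Fixpoint BinE (k : nat) (H : nat -> R) (j : nat) : R :=
  match k with O => H j | S k' => /2 * BinE k' H (S j) + /2 * BinE k' H j end.

Definition fairband s v w (A : list (R*R)) :=
  forall qd, In qd A -> fst qd = /2 /\ exists a, v <= a <= v + w /\ snd qd = -2*s*a.
Definition bandL s v w (L : list (R*R)) :=
  forall qd, In qd L -> 0 <= fst qd <= /2 /\ exists a, v <= a <= v + w /\ snd qd = -2*s*a.

Definition Inv c0 s v w x j := exists S, x = c0 - 2*s*S /\ v * INR j <= S <= (v+w) * INR j.

Lemma fair_inv s v w c0 F H : forall A, fairband s v w A ->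
  (forall x j, Inv c0 s v w x j -> F x <= H j) ->
  forall x j, Inv c0 s v w x j -> EE A F x <= BinE (length A) H j.
Proof.
  induction A as [|[q d] A IH]; intros Hb HF x j Hx; simpl; auto.
  destruct (Hb (q,d) (or_introl eq_refl)) as [Hq [a [Ha Hd]]]; simpl in Hq, Hd; subst q d.
  assert (HbA : fairband s v w A) by (intros z Hz; apply Hb; right; auto).
  assert (H1 : EE A F (x + -2*s*a) <= BinE (length A) H (S j)).
  { apply IH; auto. destruct Hx as [S [HS1 HS2]]. exists (S + a). split. rewrite HS1; ring.
    rewrite S_INR. nra. }
  assert (H2 : EE A F x <= BinE (length A) H j) by (apply IH; auto).
  lra.
Qed.

Lemma couple s v w F g : forall L, bandL s v w L ->
  (forall A c, fairband s v w A -> EE A F c <= g (length A)) ->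
  forall A c, fairband s v w A -> EE (L ++ A) F c <= EBc (map (fun qd => 2 * fst qd) L) g (length A).
Proof.
  induction L as [|[q d] L IH]; intros Hb Hbase A c HA; simpl; auto.
  destruct (Hb (q,d) (or_introl eq_refl)) as [Hq [a [Ha Hd]]]; simpl in Hq, Hd.
  assert (HbL : bandL s v w L) by (intros z Hz; apply Hb; right; auto).
  assert (HA' : fairband s v w ((/2, d) :: A)).
  { intros z [<-|Hz]; [split; [auto| exists a; auto] | apply HA; auto]. }
  pose proof (IH HbL Hbase _ c HA') as H1. simpl length in H1.
  rewrite <- (EE_perm _ _ (Permutation_middle L A (/2, d)) F c) in H1. simpl in H1.
  pose proof (IH HbL Hbase _ c HA) as H0.
  pose proof (IH HbL Hbase _ (c + d) HA) as H0'.
  set (X := EE (L ++ A) F (c + d)) in *. set (Y := EE (L ++ A) F c) in *.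
  set (B1 := EBc (map (fun qd => 2 * fst qd) L) g (S (length A))) in *.
  set (B0 := EBc (map (fun qd => 2 * fst qd) L) g (length A)) in *.
  assert (E : q * X + (1 - q) * Y = 2*q * (/2 * X + (1 - /2) * Y) + (1 - 2*q) * Y) by field.
  rewrite E. apply Rplus_le_compat; apply Rmult_le_compat_l; lra.
Qed.

Fixpoint sumR (N : nat) (phi : nat -> R) : R :=
  match N with O => 0 | S N' => sumR N' phi + phi N' end.

Lemma sumR_ext N phi psi : (forall i, (i < N)%nat -> phi i = psi i) -> sumR N phi = sumR N psi.
Proof. induction N; intros H; simpl; auto. rewrite IHN, H; auto. Qed.
Lemma sumR_plus N phi psi : sumR N (fun i => phi i + psi i) = sumR N phi + sumR N psi.
Proof. induction N; simpl; [ring|rewrite IHN; ring]. Qed.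
Lemma sumR_scal N a phi : sumR N (fun i => a * phi i) = a * sumR N phi.
Proof. induction N; simpl; [ring|rewrite IHN; ring]. Qed.
Lemma sumR_first N phi : sumR (S N) phi = phi O + sumR N (fun i => phi (S i)).
Proof. induction N; simpl in *; [ring|rewrite IHN; ring]. Qed.
Lemma sumR_le N phi psi : (forall i, (i < N)%nat -> phi i <= psi i) -> sumR N phi <= sumR N psi.
Proof. induction N; intros H; simpl; [lra|]. apply Rplus_le_compat; auto. Qed.

Fixpoint bb (k i : nat) : R :=
  match k, i with
  | O, O => 1 | O, S _ => 0
  | S k', O => bb k' O / 2
  | S k', S i' => (bb k' i' + bb k' (S i')) / 2
  end.

Lemma bb_zero k : forall i, (k < i)%nat -> bb k i = 0.
Proof. induction k; intros [|i] H; simpl; try lia; auto.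
  rewrite !IHk by lia. lra. Qed.



Lemma bb_nonneg k : forall i, 0 <= bb k i.
Proof. induction k; intros [|i]; simpl; try lra.
  - pose proof (IHk O); lra.
  - pose proof (IHk i); pose proof (IHk (S i)); lra. Qed.

Lemma BinE_sum k : forall H j0 N, (k < N)%nat ->
  BinE k H j0 = sumR N (fun i => bb k i * H (j0 + i)%nat).
Proof.
  induction k; intros H j0 N HN.
  - destruct N as [|N]; [lia|]. rewrite sumR_first. simpl.
    rewrite (sumR_ext N _ (fun _ => 0 * 0)) by (intros; simpl; ring).
    rewrite sumR_scal. rewrite Nat.add_0_r. ring.
  - destruct N as [|N]; [lia|]. rewrite sumR_first. simpl BinE.
    rewrite (IHk H (S j0) N) by lia. rewrite (IHk H j0 (S N)) by lia.
    rewrite sumR_first.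
    rewrite (sumR_ext N (fun i => bb (S k) (S i) * H (j0 + S i)%nat)
       (fun i => /2 * (bb k i * H (S j0 + i)%nat) + /2 * (bb k (S i) * H (j0 + S i)%nat))).
    2:{ intros i _. simpl bb. replace (j0 + S i)%nat with (S j0 + i)%nat by lia. field. }
    rewrite sumR_plus, !sumR_scal. simpl bb. rewrite Nat.add_0_r. field.
Qed.

Lemma fact_pos' n : 0 < INR (Factorial.fact n).
Proof. apply lt_0_INR. apply Factorial.lt_O_fact. Qed.

Lemma C_n_0 n : C n 0 = 1.
Proof. unfold C. rewrite Nat.sub_0_r. simpl. pose proof (fact_pos' n). field. lra. Qed.
Lemma C_n_n n : C n n = 1.
Proof. unfold C. rewrite Nat.sub_diag. simpl. pose proof (fact_pos' n). field. lra. Qed.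

Lemma bb_closed k : forall i, (i <= k)%nat -> bb k i = C k i / 2 ^ k.
Proof.
  induction k; intros i Hi.
  - replace i with O by lia. simpl. rewrite C_n_0. field.
  - destruct i as [|i]; simpl bb.
    + rewrite IHk by lia. rewrite !C_n_0. simpl. pose proof (pow_lt 2 k). field; lra.
    + destruct (Nat.eq_dec i k) as [->|Hne].
      * rewrite (bb_zero k (S k)) by lia. rewrite IHk by lia. rewrite !C_n_n. simpl. pose proof (pow_lt 2 k). field; lra.
      * rewrite !IHk by lia. rewrite <- pascal by lia. simpl. pose proof (pow_lt 2 k). field; lra.
Qed.

Definition cr r := C (2*r) r / 2 ^ (2*r).

Lemma cr_S r : cr (S r) = cr r * (2 * INR r + 1) / (2 * INR r + 2).
Proof.
  unfold cr, C. replace (2 * S r - S r)%nat with (S r) by lia.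
  replace (2 * r - r)%nat with r by lia.
  replace (2 * S r)%nat with (S (S (2 * r))) by lia.
  rewrite !fact_simpl. rewrite !mult_INR, !S_INR, mult_INR.
  replace (2 ^ S (S (2*r))) with (4 * 2 ^ (2*r)) by (simpl; ring).
  pose proof (fact_pos' r). pose proof (fact_pos' (2*r)). pose proof (pow_lt 2 (2*r)).
  assert (0 <= INR r) by apply pos_INR. simpl INR.
  field. repeat split; lra.
Qed.

Lemma cr_pos r : 0 <= cr r.
Proof. unfold cr, C. pose proof (fact_pos' r). pose proof (fact_pos' (2*r)).
  pose proof (fact_pos' (2*r - r)). pose proof (pow_lt 2 (2*r)).
  apply Rmult_le_pos; [apply Rmult_le_pos|]; try lra.
  apply Rlt_le, Rinv_0_lt_compat; nra. apply Rlt_le, Rinv_0_lt_compat; lra. Qed.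

Lemma cr_sq r : cr r * cr r <= 1 / (2 * INR r + 1).
Proof.
  induction r.
  - unfold cr. simpl. rewrite C_n_0. lra.
  - rewrite cr_S. rewrite S_INR. assert (0 <= INR r) by apply pos_INR.
    pose proof (cr_pos r). set (u := cr r) in *.
    assert (Hd : 0 < 2 * INR r + 1) by lra.
    assert (u * u * (2 * INR r + 1) <= 1).
    { apply (Rmult_le_compat_r (2 * INR r + 1)) in IHr; [|lra].
      replace (1 / (2 * INR r + 1) * (2 * INR r + 1)) with 1 in IHr by (field; lra). lra. }
    apply (Rmult_le_reg_r ((2 * INR r + 2) * (2 * INR r + 2) * (2 * (INR r + 1) + 1))).
    { nra. }
    replace (u * (2 * INR r + 1) / (2 * INR r + 2) * (u * (2 * INR r + 1) / (2 * INR r + 2)) *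
      ((2 * INR r + 2) * (2 * INR r + 2) * (2 * (INR r + 1) + 1)))
      with (u * u * (2 * INR r + 1) * ((2 * INR r + 1) * (2 * INR r + 3))) by (field; lra).
    replace (1 / (2 * (INR r + 1) + 1) * ((2 * INR r + 2) * (2 * INR r + 2) * (2 * (INR r + 1) + 1)))
      with ((2 * INR r + 2) * (2 * INR r + 2)) by (field; lra).
    assert (0 <= (2 * INR r + 1) * (2 * INR r + 3)) by nra.
    nra.
Qed.

Lemma bb_even_le r i : bb (2*r) i <= cr r.
Proof.
  destruct (le_lt_dec i (2*r)) as [Hi|Hi].
  - rewrite bb_closed by lia. unfold cr. pose proof (pow_lt 2 (2*r)).
    apply Rmult_le_compat_r. apply Rlt_le, Rinv_0_lt_compat; lra. apply C_maj; auto.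
  - rewrite bb_zero by lia. apply cr_pos.
Qed.

Lemma bb_max k i : bb k i <= sqrt (2 / (INR k + 1)).
Proof.
  destruct (Nat.Even_or_Odd k) as [[r ->]|[r ->]].
  - eapply Rle_trans. apply bb_even_le.
    rewrite <- (sqrt_square (cr r)) by apply cr_pos. apply sqrt_le_1_alt.
    eapply Rle_trans. apply cr_sq. rewrite mult_INR. simpl INR.
    assert (0 <= INR r) by apply pos_INR.
    apply Rmult_le_compat; try lra. apply Rlt_le, Rinv_0_lt_compat; lra. right; f_equal; ring.
  - assert (Hb : bb (S (2*r)) i <= cr r).
    { destruct i as [|i].
      - change (bb (S (2*r)) 0) with (bb (2*r) 0 / 2). pose proof (bb_even_le r 0); pose proof (bb_nonneg (2*r) 0); lra.
      - change (bb (S (2*r)) (S i)) with ((bb (2*r) i + bb (2*r) (S i)) / 2).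
        pose proof (bb_even_le r i); pose proof (bb_even_le r (S i)); lra. }
    replace (2 * r + 1)%nat with (S (2*r)) by lia.
    eapply Rle_trans. apply Hb.
    rewrite <- (sqrt_square (cr r)) by apply cr_pos. apply sqrt_le_1_alt.
    eapply Rle_trans. apply cr_sq. rewrite S_INR, mult_INR. simpl INR.
    assert (0 <= INR r) by apply pos_INR.
    apply (Rmult_le_reg_r ((2 * INR r + 1) * ((1+1) * INR r + 1 + 1))). nra.
    replace (1 / (2 * INR r + 1) * ((2 * INR r + 1) * ((1 + 1) * INR r + 1 + 1))) with ((1 + 1) * INR r + 1 + 1) by (field; lra).
    replace (2 / ((1 + 1) * INR r + 1 + 1) * ((2 * INR r + 1) * ((1 + 1) * INR r + 1 + 1))) with (2 * (2 * INR r + 1)) by (field; lra).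
    lra.
Qed.

Open Scope R_scope. Open Scope bool_scope. Open Scope R_scope.

Lemma Rleb_true x y : Rleb x y = true <-> x <= y.
Proof. unfold Rleb; destruct (Rle_dec x y); split; intros; auto; try discriminate; contradiction. Qed.
Lemma Rleb_false x y : Rleb x y = false <-> y < x.
Proof. unfold Rleb; destruct (Rle_dec x y); split; intros; auto; try discriminate; lra. Qed.

Lemma div_le_l x y v : 0 < v -> x <= y * v -> x / v <= y.
Proof. intros Hv H. apply (Rmult_le_reg_r v); auto. unfold Rdiv; rewrite Rmult_assoc, Rinv_l; lra. Qed.
Lemma le_div_r x y v : 0 < v -> x * v <= y -> x <= y / v.
Proof. intros Hv H. apply (Rmult_le_reg_r v); auto. unfold Rdiv; rewrite Rmult_assoc, Rinv_l; lra. Qed.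

Lemma Rabs_le_inv' x t : Rabs x <= t -> -t <= x <= t.
Proof. unfold Rabs; destruct (Rcase_abs x); lra. Qed.

Lemma count_int a b N :
  sumR N (fun i => if Rleb a (INR i) && Rleb (INR i) b then 1 else 0)
  <= Rmax 0 (Rmin b (INR N - 1) - a + 1).
Proof.
  induction N; simpl sumR.
  - apply Rmax_l.
  - rewrite S_INR. destruct (Rleb a (INR N)) eqn:E1; destruct (Rleb (INR N) b) eqn:E2; simpl;
    try apply Rleb_true in E1; try apply Rleb_true in E2;
    try apply Rleb_false in E1; try apply Rleb_false in E2;
    revert IHN; unfold Rmax, Rmin;
    repeat match goal with |- context [Rle_dec ?x ?y] => destruct (Rle_dec x y) end; intros;
    repeat match goal with H : context [Rle_dec ?x ?y] |- _ => destruct (Rle_dec x y) end; lra.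
Qed.

Fixpoint sr (rs : list R) := match rs with nil => 0 | r :: rs' => r + sr rs' end.
Fixpoint vr (rs : list R) := match rs with nil => 0 | r :: rs' => r * (1 - r) + vr rs' end.

Lemma EBc_mono rs : (forall r, In r rs -> 0 <= r <= 1) ->
  forall g h k0, (forall k, g k <= h k) -> EBc rs g k0 <= EBc rs h k0.
Proof. induction rs as [|r rs IH]; intros Hr g h k0 H; simpl; auto.
  assert (0 <= r <= 1) by (apply Hr; left; auto).
  assert (IH' : forall k, EBc rs g k <= EBc rs h k) by (intros; apply IH; auto; intros; apply Hr; right; auto).
  pose proof (IH' (S k0)); pose proof (IH' k0). nra. Qed.

Lemma EBc_quad rs : forall a b m k0,
  EBc rs (fun k => a + b * (INR k - m) ^ 2) k0 = a + b * ((INR k0 + sr rs - m) ^ 2 + vr rs).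
Proof. induction rs as [|r rs IH]; intros; cbn [EBc sr vr].
  - ring.
  - rewrite !IH, S_INR. ring. Qed.

Lemma vr_le_sr rs : (forall r, In r rs -> 0 <= r <= 1) -> vr rs <= sr rs.
Proof. induction rs as [|r rs IH]; intros H; simpl; [lra|].
  assert (0 <= r <= 1) by (apply H; left; auto).
  assert (vr rs <= sr rs) by (apply IH; intros; apply H; right; auto). nra. Qed.

Definition Find t x := if Rleb (Rabs x) t then 1 else 0.
Definition gfun t v w (k : nat) := ((t + w * INR k) / v + 1) * sqrt (2 / (INR k + 1)).

Lemma fair_bound s v w t : (s = 1 \/ s = -1) -> 0 < v -> 0 <= w -> 0 <= t ->
  forall A c, fairband s v w A -> EE A (Find t) c <= gfun t v w (length A).
Proof.
  intros Hs Hv Hw Ht A c HA.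
  set (k := length A).
  set (A0 := (s * c - t) / 2).
  set (H := fun j : nat => if Rleb (A0 - w * INR j) (v * INR j) && Rleb (v * INR j) (A0 + t) then 1 else 0).
  assert (HF : forall x j, Inv c s v w x j -> Find t x <= H j).
  { intros x j [S [HS1 HS2]]. unfold Find, H.
    destruct (Rleb (Rabs x) t) eqn:E; [|destruct (_ && _); lra].
    apply Rleb_true, Rabs_le_inv' in E.
    assert (HS : A0 <= S <= A0 + t).
    { unfold A0. destruct Hs; subst s; lra. }
    replace (Rleb (A0 - w * INR j) (v * INR j)) with true by (symmetry; apply Rleb_true; lra).
    replace (Rleb (v * INR j) (A0 + t)) with true by (symmetry; apply Rleb_true; lra). simpl; lra. }
  eapply Rle_trans. apply (fair_inv s v w c (Find t) H A HA HF c 0).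
  { exists 0. simpl. split; lra. }
  fold k. rewrite (BinE_sum k H 0 (S k)) by lia.
  set (a := (A0 - w * INR k) / v). set (b := (A0 + t) / v).
  eapply Rle_trans with (sumR (S k) (fun i => sqrt (2 / (INR k + 1)) *
     (if Rleb a (INR i) && Rleb (INR i) b then 1 else 0))).
  { apply sumR_le. intros i Hi. simpl. pose proof (bb_max k i). pose proof (bb_nonneg k i).
    assert (HHi : H i <= (if Rleb a (INR i) && Rleb (INR i) b then 1 else 0)).
    { unfold H. destruct (Rleb (A0 - w * INR i) (v * INR i)) eqn:E1; destruct (Rleb (v * INR i) (A0 + t)) eqn:E2; simpl;
      try (destruct (_ && _); lra).
      apply Rleb_true in E1; apply Rleb_true in E2.
      assert (INR i <= INR k) by (apply le_INR; lia).
      assert (a <= INR i). { unfold a. apply div_le_l; auto. nra. }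
      assert (INR i <= b). { unfold b. apply le_div_r; auto. lra. }
      replace (Rleb a (INR i)) with true by (symmetry; apply Rleb_true; lra).
      replace (Rleb (INR i) b) with true by (symmetry; apply Rleb_true; lra). simpl; lra. }
    assert (0 <= H i). { unfold H; cbv beta. case (Rleb (A0 - w * INR i) (v * INR i) && Rleb (v * INR i) (A0 + t)); lra. }
    assert (0 <= sqrt (2 / (INR k + 1))) by apply sqrt_pos.
    apply Rmult_le_compat; lra. }
  rewrite sumR_scal. unfold gfun. rewrite (Rmult_comm ((t + w * INR k) / v + 1)).
  apply Rmult_le_compat_l. apply sqrt_pos.
  eapply Rle_trans. apply count_int.
  assert (b - a + 1 = (t + w * INR k) / v + 1) by (unfold a, b; field; lra).
  assert (0 <= INR k) by apply pos_INR.
  assert (0 <= (t + w * INR k) / v) by (apply le_div_r; auto; nra).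
  unfold Rmax, Rmin; repeat match goal with |- context [Rle_dec ?x ?y] => destruct (Rle_dec x y) end;
  rewrite ?S_INR in *; lra.
Qed.

Lemma frac_le a b c d : 0 < b -> 0 < d -> a * d <= c * b -> a / b <= c / d.
Proof. intros Hb Hd H. apply div_le_l; auto.
  replace (c / d * b) with ((c * b) / d) by (field; lra). apply le_div_r; auto. Qed.

Lemma sqrt4 : sqrt 4 = 2.
Proof. replace 4 with (2*2) by ring. apply sqrt_square; lra. Qed.

Definition Bnd t v w mu := ((t + 2*w*mu)/v + 1) * sqrt (4/mu) + 8*(t/v + 1 + w*mu/v)/mu + 4*w/v.

Lemma g_point t v w mu k : 0 < v -> 0 <= w -> 0 <= t -> 0 < mu ->
  gfun t v w k <= ((t + 2*w*mu)/v + 1) * sqrt (4/mu)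
     + (8*(t/v + 1 + w*mu/v)/(mu*mu) + 4*(w/v)/mu) * (INR k - mu)^2.
Proof.
  intros Hv Hw Ht Hmu. unfold gfun. set (x := INR k). assert (Hx : 0 <= x) by apply pos_INR.
  set (X := t / v). set (Wv := w / v).
  assert (HX : 0 <= X) by (apply le_div_r; lra). assert (HW : 0 <= Wv) by (apply le_div_r; lra).
  replace ((t + w * x) / v) with (X + Wv * x) by (unfold X, Wv; field; lra).
  replace ((t + 2 * w * mu) / v) with (X + 2 * Wv * mu) by (unfold X, Wv; field; lra).
  replace (w * mu / v) with (Wv * mu) by (unfold Wv; field; lra).
  pose proof (sqrt_pos (2 / (x + 1))) as Hs0.
  set (D := (x - mu)^2). assert (HD : 0 <= D) by (unfold D; apply pow2_ge_0).
  assert (HG2 : 0 <= 8 * (X + 1 + Wv * mu) / (mu * mu) + 4 * Wv / mu).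
  { apply Rplus_le_le_0_compat; apply le_div_r; nra. }
  destruct (Rle_dec D (mu*mu/4)) as [Hn|Hf].
  - assert (Hxr : mu/2 <= x <= 2*mu) by (unfold D in Hn; nra).
    assert (Hsq : sqrt (2 / (x + 1)) <= sqrt (4 / mu)).
    { apply sqrt_le_1_alt. apply frac_le; lra. }
    assert (0 <= X + Wv * x + 1) by nra.
    assert (X + Wv * x + 1 <= X + 2 * Wv * mu + 1) by nra.
    assert ((X + Wv * x + 1) * sqrt (2 / (x + 1)) <= (X + 2 * Wv * mu + 1) * sqrt (4 / mu))
      by (apply Rmult_le_compat; lra).
    nra.
  - assert (Hs2 : sqrt (2 / (x + 1)) <= 2).
    { apply Rle_trans with (sqrt 4); [apply sqrt_le_1_alt; apply div_le_l; lra | rewrite sqrt4; lra]. }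
    set (u := D / mu).
    assert (HDu : D = u * mu) by (unfold u; field; lra).
    assert (Hu : mu / 4 <= u) by (apply le_div_r; lra).
    assert (Habs : Rabs (x - mu) <= 2 * u).
    { assert (Rabs (x - mu) * Rabs (x - mu) = D) by (unfold D; rewrite <- Rabs_mult; rewrite Rabs_right; [ring|apply Rle_ge, (Rle_0_sqr (x - mu))]).
      assert (mu / 2 <= Rabs (x - mu)) by (pose proof (Rabs_pos (x - mu)); nra). nra. }
    assert (Hxx : x <= mu + 2 * u) by (pose proof (Rle_abs (x - mu)); lra).
    replace (8 * (X + 1 + Wv * mu) / (mu * mu) + 4 * Wv / mu) with ((8 * (X + 1 + Wv * mu) / mu + 4 * Wv) / mu)
      by (field; lra).
    fold D. rewrite HDu.
    replace ((8 * (X + 1 + Wv * mu) / mu + 4 * Wv) / mu * (u * mu)) with (8 * (X + 1) * (u / mu) + 8 * Wv * u + 4 * Wv * u)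
      by (field; lra).
    assert (Hum : 1/4 <= u / mu) by (apply le_div_r; lra).
    assert (0 <= X + Wv * x + 1) by nra.
    assert ((X + Wv * x + 1) * sqrt (2 / (x + 1)) <= (X + Wv * x + 1) * 2) by (apply Rmult_le_compat_l; lra).
    assert (0 <= (X + 2 * Wv * mu + 1) * sqrt (4 / mu)) by (apply Rmult_le_pos; [nra|apply sqrt_pos]).
    nra.
Qed.

Lemma band_bound s v w t L : (s = 1 \/ s = -1) -> 0 < v -> 0 <= w -> 0 <= t -> bandL s v w L ->
  0 < sr (map (fun qd => 2 * fst qd) L) ->
  forall c, EE L (Find t) c <= Bnd t v w (sr (map (fun qd => 2 * fst qd) L)).
Proof.
  intros Hs Hv Hw Ht HL Hmu c. set (mu := sr (map (fun qd => 2 * fst qd) L)) in *.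
  rewrite <- (app_nil_r L).
  eapply Rle_trans. apply (couple s v w (Find t) (gfun t v w) L HL); auto.
  { intros A c' HA; apply (fair_bound s); auto. }
  { intros qd []. }
  simpl length.
  assert (Hrs : forall r, In r (map (fun qd => 2 * fst qd) L) -> 0 <= r <= 1).
  { intros r Hr. apply in_map_iff in Hr. destruct Hr as [qd [<- Hqd]]. destruct (HL qd Hqd) as [H _]. lra. }
  eapply Rle_trans. apply EBc_mono. exact Hrs. intros k. apply (g_point t v w mu k); auto.
  rewrite EBc_quad. fold mu. simpl INR.
  pose proof (vr_le_sr _ Hrs) as Hv2. fold mu in Hv2.
  assert (HG2 : 0 <= 8 * (t / v + 1 + w * mu / v) / (mu * mu) + 4 * (w / v) / mu).
  { assert (0 <= t/v) by (apply le_div_r; lra). assert (0 <= w/v) by (apply le_div_r; lra).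
    assert (0 <= w * mu / v) by (apply le_div_r; nra).
    apply Rplus_le_le_0_compat; apply le_div_r; nra. }
  replace ((0 + mu - mu) ^ 2) with 0 by ring. rewrite Rplus_0_l.
  unfold Bnd.
  assert (E : (8 * (t / v + 1 + w * mu / v) / (mu * mu) + 4 * (w / v) / mu) * mu = 8 * (t / v + 1 + w * mu / v) / mu + 4 * w / v) by (field; lra).
  assert (vr (map (fun qd => 2 * fst qd) L) * (8 * (t / v + 1 + w * mu / v) / (mu * mu) + 4 * (w / v) / mu) <= mu * (8 * (t / v + 1 + w * mu / v) / (mu * mu) + 4 * (w / v) / mu)) by (apply Rmult_le_compat_r; auto).
  nra.
Qed.

Lemma div_le_l' x y v : 0 < v -> x <= v * y -> x / v <= y.
Proof. intros Hv H. apply (Rmult_le_reg_r v); auto. unfold Rdiv; rewrite Rmult_assoc, Rinv_l; lra. Qed.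

Lemma sumL_cons {A} (a : A) L g : sumL (a :: L) g = g a + sumL L g.
Proof. reflexivity. Qed.
Lemma sumL_nil {A} (g : A -> R) : sumL nil g = 0.
Proof. reflexivity. Qed.
Lemma sumL_app {A} (L1 L2 : list A) g : sumL (L1 ++ L2) g = sumL L1 g + sumL L2 g.
Proof. induction L1; simpl; rewrite ?sumL_nil, ?sumL_cons; [ring|]. rewrite IHL1; ring. Qed.
Lemma sumL_le {A} (L : list A) g h : (forall x, In x L -> g x <= h x) -> sumL L g <= sumL L h.
Proof. induction L; intros H; rewrite ?sumL_nil, ?sumL_cons; [lra|].
  apply Rplus_le_compat; [apply H; left; auto| apply IHL; intros; apply H; right; auto]. Qed.
Lemma sumL_plus {A} (L : list A) g h : sumL L (fun x => g x + h x) = sumL L g + sumL L h.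
Proof. induction L; rewrite ?sumL_nil, ?sumL_cons; [ring|rewrite IHL; ring]. Qed.
Lemma sumL_scal {A} (L : list A) a g : sumL L (fun x => a * g x) = a * sumL L g.
Proof. induction L; rewrite ?sumL_nil, ?sumL_cons; [ring|rewrite IHL; ring]. Qed.
Lemma sumL_const {A} (L : list A) a : sumL L (fun _ => a) = INR (length L) * a.
Proof. induction L; rewrite ?sumL_nil, ?sumL_cons; simpl length; [simpl; ring|rewrite IHL, S_INR; ring]. Qed.
Lemma sumL_nonneg {A} (L : list A) g : (forall x, In x L -> 0 <= g x) -> 0 <= sumL L g.
Proof. induction L; intros H; rewrite ?sumL_nil, ?sumL_cons; [lra|].
  pose proof (H a (or_introl eq_refl)). assert (0 <= sumL L g) by (apply IHL; intros; apply H; right; auto). lra. Qed.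
Lemma sumL_filter {A} (P : A -> bool) L g : sumL L (fun x => if P x then g x else 0) = sumL (filter P L) g.
Proof. induction L as [|a L IH]; [reflexivity|]. rewrite sumL_cons. simpl filter.
  destruct (P a); [rewrite sumL_cons|]; rewrite IH; ring. Qed.
Lemma sumL_perm {A} (L1 L2 : list A) g : Permutation L1 L2 -> sumL L1 g = sumL L2 g.
Proof. induction 1; rewrite ?sumL_cons; try lra. Qed.

Lemma filter_perm {A} (P : A -> bool) L : Permutation L (filter P L ++ filter (fun x => negb (P x)) L).
Proof. induction L; simpl; auto. destruct (P a); simpl.
  - constructor; auto.
  - eapply perm_trans. apply perm_skip, IHL. apply Permutation_middle. Qed.

Lemma In_firstn' {A} k (L : list A) x : In x (firstn k L) -> In x L.
Proof. intros H. rewrite <- (firstn_skipn k L). apply in_or_app; auto. Qed.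

Lemma INR_length_filter {A} (P : A -> bool) L : INR (length (filter P L)) = sumL L (fun x => if P x then 1 else 0).
Proof. induction L as [|a L IH]; [reflexivity|]. rewrite sumL_cons. simpl filter.
  destruct (P a); simpl length; rewrite ?S_INR, IH; ring. Qed.

Section Exch.
Context {A B : Type} (eqb : B -> B -> bool) (Heq : forall x y, eqb x y = true <-> x = y).

Lemma exch_one (Cs : list B) (b : B) (r : R) : NoDup Cs -> In b Cs ->
  sumL Cs (fun c => if eqb b c then r else 0) = r.
Proof.
  induction Cs as [|c Cs IH]; intros Hnd Hin; [destruct Hin|].
  inversion Hnd; subst. rewrite sumL_cons. destruct Hin as [->|Hin].
  - replace (eqb b b) with true by (symmetry; apply Heq; auto).
    rewrite (sumL_ext_in _ _ (fun _ => 0)). rewrite sumL_const; ring.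
    intros c' Hc'. destruct (eqb b c') eqn:E; auto. apply Heq in E; subst; contradiction.
  - rewrite IH; auto. destruct (eqb b c) eqn:E; [apply Heq in E; subst; contradiction| ring].
Qed.

Lemma exch (Cs : list B) (L : list A) (cls : A -> B) (g : A -> R) : NoDup Cs -> (forall a, In a L -> In (cls a) Cs) ->
  sumL Cs (fun c => sumL L (fun a => if eqb (cls a) c then g a else 0)) = sumL L g.
Proof.
  intros Hnd. induction L as [|a L IH]; intros Hin.
  - rewrite (sumL_ext_in Cs _ (fun _ => 0)) by (intros; reflexivity). rewrite sumL_const, sumL_nil; ring.
  - rewrite (sumL_ext_in Cs _ (fun c => (if eqb (cls a) c then g a else 0) + sumL L (fun a0 => if eqb (cls a0) c then g a0 else 0)))
      by (intros; rewrite sumL_cons; auto).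
    rewrite sumL_plus, IH, exch_one, sumL_cons; auto. apply Hin; left; auto. intros; apply Hin; right; auto.
Qed.
End Exch.

Lemma maxel {B} (Cs : list B) (m : B -> R) : Cs <> nil ->
  exists c, In c Cs /\ sumL Cs m <= INR (length Cs) * m c.
Proof.
  induction Cs as [|c Cs IH]; intros Hne; [contradiction|].
  destruct Cs as [|c' Cs'].
  - exists c. split; [left; auto|]. rewrite sumL_cons, sumL_nil. simpl. lra.
  - destruct IH as [d [Hd Hs]]; [discriminate|].
    set (L := c' :: Cs') in *. rewrite sumL_cons. simpl length. rewrite S_INR.
    assert (0 <= INR (length L)) by apply pos_INR.
    destruct (Rle_dec (m d) (m c)).
    + exists c; split; [left; auto|]. change (INR (S (length Cs'))) with (INR (length L)). nra.
    + exists d; split; [right; auto|]. change (INR (S (length Cs'))) with (INR (length L)). nra.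
Qed.

Lemma pigeon {B} (Cs : list B) (m : B -> R) X : Cs <> nil -> X <= sumL Cs m ->
  exists c, In c Cs /\ X / INR (length Cs) <= m c.
Proof.
  intros Hne HX. destruct (maxel Cs m Hne) as [c [Hc Hs]]. exists c; split; auto.
  assert (Hl : 0 < INR (length Cs)) by (apply lt_0_INR; destruct Cs; [contradiction| simpl; lia]).
  apply div_le_l'; auto. lra.
Qed.

Lemma greedy {A} (L : list A) (g : A -> R) : (forall x, In x L -> 0 <= g x <= 1) ->
  forall m, m <= sumL L g -> exists k, m <= sumL (firstn k L) g <= Rmax m 0 + 1.
Proof.
  induction L as [|a L IH]; intros Hg m Hm.
  - exists O. simpl. rewrite sumL_nil in *. unfold Rmax; destruct (Rle_dec m 0); lra.
  - rewrite sumL_cons in Hm. pose proof (Hg a (or_introl eq_refl)) as Ha.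
    destruct (Rle_dec m 0).
    + exists O. simpl. rewrite sumL_nil. unfold Rmax; destruct (Rle_dec m 0); lra.
    + destruct (Rle_dec m (g a)).
      * exists 1%nat. simpl. rewrite sumL_cons, sumL_nil. unfold Rmax; destruct (Rle_dec m 0); lra.
      * destruct (IH (fun x Hx => Hg x (or_intror Hx)) (m - g a)) as [k Hk]; [lra|].
        exists (S k). simpl firstn. rewrite sumL_cons. revert Hk.
        unfold Rmax; destruct (Rle_dec m 0); destruct (Rle_dec (m - g a) 0); intros; lra.
Qed.

Lemma sumL_map {A B} (h : A -> B) L g : sumL (map h L) g = sumL L (fun x => g (h x)).
Proof. induction L; [reflexivity|]. simpl map. rewrite !sumL_cons, IHL; auto. Qed.

Lemma sumL_seq N phi : sumL (seq 0 N) phi = sumR N phi.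
Proof. induction N; [reflexivity|]. rewrite seq_S, sumL_app, IHN. simpl. rewrite sumL_cons, sumL_nil. ring. Qed.

Lemma window_In n y : In y (window n) <-> (- Z.of_nat (2*n) <= y <= Z.of_nat (2*n))%Z.
Proof.
  unfold window. rewrite in_map_iff. split.
  - intros [i [<- Hi]]. apply in_seq in Hi. lia.
  - intros H. exists (Z.to_nat (y + Z.of_nat (2*n))). split; [lia|]. apply in_seq. lia.
Qed.

Lemma window_NoDup n : NoDup (window n).
Proof. unfold window. apply FinFun.Injective_map_NoDup; [intros x y H; lia|apply seq_NoDup]. Qed.

Lemma path_bound Y : nn_path Y -> forall k, (Z.abs (Y k) <= Z.of_nat k)%Z.
Proof. intros [H0 H1]. induction k; [rewrite H0; simpl; lia|]. specialize (H1 k). lia. Qed.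

Lemma eta_sum Y n y : (1 <= n)%nat ->
  INR (eta2n Y n y) = sumL (seq 0 (2*n)) (fun k => if Z.eqb (Y k) y then 1 else 0).
Proof. intros Hn. unfold eta2n, eta. replace (S (2*n-1)) with (2*n)%nat by lia.
  apply INR_length_filter. Qed.

Lemma eta_total Y n : nn_path Y -> (1 <= n)%nat ->
  sumL (window n) (fun y => INR (eta2n Y n y)) = 2 * INR n.
Proof.
  intros HY Hn. rewrite (sumL_ext_in _ _ (fun y => sumL (seq 0 (2*n)) (fun k => if Z.eqb (Y k) y then 1 else 0)))
    by (intros; apply eta_sum; auto).
  rewrite (exch Z.eqb) with (g := fun _ => 1).
  - rewrite sumL_const, length_seq, mult_INR. simpl; ring.
  - intros; apply Z.eqb_eq.
  - apply window_NoDup.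
  - intros k Hk. apply in_seq in Hk. apply window_In. pose proof (path_bound Y HY k). lia.
Qed.

Lemma visited Y n y : (1 <= n)%nat -> 0 < INR (eta2n Y n y) -> exists k, (k < 2*n)%nat /\ Y k = y.
Proof.
  intros Hn H. unfold eta2n, eta in H. replace (S (2*n-1)) with (2*n)%nat in H by lia.
  destruct (filter (fun k => Z.eqb (Y k) y) (seq 0 (2*n))) as [|k l] eqn:E; [simpl in H; lra|].
  assert (Hk : In k (filter (fun k => Z.eqb (Y k) y) (seq 0 (2*n)))) by (rewrite E; left; auto).
  apply filter_In in Hk. destruct Hk as [Hk1 Hk2]. apply in_seq in Hk1. apply Z.eqb_eq in Hk2. exists k; split; auto; lia.
Qed.

Lemma window_count n X : 0 <= X ->
  sumL (window n) (fun y => if Rltb (IZR (Z.abs y)) X then 1 else 0) <= 2 * X + 1.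
Proof.
  intros HX. unfold window. rewrite sumL_map, sumL_seq.
  set (a := INR (2*n) - X). set (b := INR (2*n) + X).
  eapply Rle_trans. apply (sumR_le _ _ (fun i => if Rleb a (INR i) && Rleb (INR i) b then 1 else 0)).
  - intros i _. unfold Rltb. destruct (Rlt_dec _ _) as [Hl|Hl]; [|destruct (_ && _); lra].
    rewrite abs_IZR, minus_IZR, <- !INR_IZR_INZ in Hl.
    apply Rabs_def2 in Hl. destruct Hl.
    replace (Rleb a (INR i)) with true by (symmetry; apply Rleb_true; unfold a; lra).
    replace (Rleb (INR i) b) with true by (symmetry; apply Rleb_true; unfold b; lra). simpl; lra.
  - eapply Rle_trans. apply count_int. unfold a, b, Rmax, Rmin.
    repeat match goal with |- context [Rle_dec ?x ?y] => destruct (Rle_dec x y) end; lra.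
Qed.

Lemma Int_part_nonneg r : 0 <= r -> (0 <= Int_part r)%Z.
Proof. intros H. destruct (base_Int_part r) as [_ H2].
  assert (-1 < IZR (Int_part r)) by lra. apply lt_IZR in H0. lia. Qed.

Lemma INR_Z_to_nat z : (0 <= z)%Z -> INR (Z.to_nat z) = IZR z.
Proof. intros H. rewrite INR_IZR_INZ, Z2Nat.id; auto. Qed.

Lemma idx_bounds x w : 0 <= x -> 0 < w ->
  w * INR (Z.to_nat (Int_part (x / w))) <= x <= w * INR (Z.to_nat (Int_part (x / w))) + w.
Proof.
  intros Hx Hw. assert (0 <= x / w) by (apply le_div_r; lra).
  rewrite INR_Z_to_nat by (apply Int_part_nonneg; auto).
  destruct (base_Int_part (x / w)) as [H1 H2].
  set (z := IZR (Int_part (x / w))) in *.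
  assert (x = w * (x / w)) by (field; lra). split; nra.
Qed.

Section Core.
Variables (n : nat) (Y : nat -> Z) (p : Z -> R) (f : Z -> Z) (Y0' : Z) (q t T w mus : R).
Hypotheses (HY : nn_path Y) (Hn : (1 <= n)%nat)
  (Hf : forall y, f y = 1%Z \/ f y = (-1)%Z)
  (Hp : forall y, 0 <= p y <= 1)
  (HA1 : forall k, (k <= 2*n)%nat -> IZR (Z.abs (Y k)) < t)
  (HA2 : forall y, In y (window n) -> INR (eta2n Y n y) < t)
  (Hq : forall y, (Y0' <= Z.abs y)%Z -> IZR (Z.abs y) < t -> q <= p y)
  (Hq0 : 0 <= q) (HT : 0 < T) (Hw : 0 < w) (HwT : w <= T/2) (Hmus : 0 < mus) (HY0 : 0 <= IZR Y0')
  (Hmass : INR n <= 2 * INR n - t * (2 * IZR Y0' + 1) - T * (2 * t + 1))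
  (Hsupply : mus <= (q * INR n / t) / (2 * (t / w + 1))).

Let W := window n.
Let eta y := INR (eta2n Y n y).
Let good y := Rleb T (eta y) && Z.leb Y0' (Z.abs y).

Lemma t_pos : 0 < t.
Proof. pose proof (HA1 0 ltac:(lia)). pose proof (IZR_le 0 (Z.abs (Y 0)) (Z.abs_nonneg _)). lra. Qed.

Lemma vis y : 0 < eta y -> IZR (Z.abs y) < t.
Proof. intros H. destruct (visited Y n y Hn H) as [k [Hk <-]]. apply HA1. lia. Qed.

Lemma good_mass : INR n <= sumL W (fun y => if good y then eta y else 0).
Proof.
  pose proof (eta_total Y n HY Hn) as Htot. fold W in Htot.
  rewrite (sumL_ext_in W _ (fun y => (if good y then eta y else 0) + (if good y then 0 else eta y))) in Htot
    by (intros; destruct (good x); unfold eta; ring).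
  rewrite sumL_plus in Htot.
  assert (Hbad : sumL W (fun y => if good y then 0 else eta y) <=
     sumL W (fun y => t * (if Rltb (IZR (Z.abs y)) (IZR Y0') then 1 else 0) + T * (if Rltb (IZR (Z.abs y)) t then 1 else 0))).
  { apply sumL_le. intros y Hy. pose proof (HA2 y Hy) as Hlt. fold (eta y) in Hlt. pose proof t_pos.
    assert (He : 0 <= eta y) by apply pos_INR.
    assert (I1 : 0 <= (if Rltb (IZR (Z.abs y)) (IZR Y0') then 1 else 0)) by (case (Rltb (IZR (Z.abs y)) (IZR Y0')); lra).
    assert (I2 : 0 <= (if Rltb (IZR (Z.abs y)) t then 1 else 0)) by (case (Rltb (IZR (Z.abs y)) t); lra).
    unfold good. destruct (Rleb T (eta y)) eqn:E1; destruct (Z.leb Y0' (Z.abs y)) eqn:E2; simpl.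
    - nra.
    - apply Z.leb_gt in E2. apply IZR_lt in E2. unfold Rltb at 1. destruct (Rlt_dec _ _); [|lra]. nra.
    - apply Rleb_false in E1. destruct (Rle_dec (eta y) 0); [nra|].
      pose proof (vis y ltac:(lra)). unfold Rltb at 2. destruct (Rlt_dec _ _); [|lra]. nra.
    - apply Z.leb_gt in E2. apply IZR_lt in E2. unfold Rltb at 1. destruct (Rlt_dec _ _); [|lra]. nra. }
  rewrite sumL_plus, !sumL_scal in Hbad.
  pose proof (window_count n (IZR Y0') HY0). pose proof (window_count n t (Rlt_le _ _ t_pos)).
  fold W in H, H0. pose proof t_pos. nra.
Qed.


Lemma good_vis y : good y = true -> IZR (Z.abs y) < t /\ T <= eta y /\ (Y0' <= Z.abs y)%Z.
Proof. unfold good. intros H. apply andb_true_iff in H. destruct H as [H1 H2].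
  apply Rleb_true in H1. apply Z.leb_le in H2. split; auto. apply vis. lra. Qed.

Lemma p_mass : q * INR n / t <= sumL W (fun y => if good y then p y else 0).
Proof.
  pose proof t_pos. pose proof good_mass.
  apply Rle_trans with (sumL W (fun y => (q / t) * (if good y then eta y else 0))).
  - rewrite sumL_scal. replace (q * INR n / t) with (q / t * INR n) by (field; lra).
    apply Rmult_le_compat_l; auto. apply le_div_r; lra.
  - apply sumL_le. intros y Hy. destruct (good y) eqn:E; [|lra].
    destruct (good_vis y E) as [H1 [H2 H3]]. pose proof (Hq y H3 H1). pose proof (HA2 y Hy). fold (eta y) in H5.
    replace (q / t * eta y) with (q * (eta y / t)) by (field; lra).
    assert (eta y / t <= 1) by (apply div_le_l; lra). assert (0 <= eta y / t) by (apply le_div_r; lra). nra.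
Qed.


Let idx y := Z.to_nat (Int_part (eta y / w)).
Let sb y := if Z.eqb (f y) 1 then 0%nat else 1%nat.
Let ci y := (2 * idx y + sb y)%nat.
Let Nidx := Z.to_nat (up (t / w)).
Let Cs := seq 0 (2 * Nidx).
Let cls y := if good y then ci y else 0%nat.

Lemma Nidx_bounds : (1 <= Nidx)%nat /\ t / w < INR Nidx <= t / w + 1.
Proof.
  pose proof t_pos. destruct (archimed (t / w)) as [H1 H2].
  assert (0 < t / w) by (apply Rdiv_lt_0_compat; lra).
  assert (Hu : (0 < up (t / w))%Z) by (apply lt_IZR; lra).
  unfold Nidx. rewrite INR_Z_to_nat by lia. split; [lia| lra].
Qed.

Lemma idx_lt y : In y W -> good y = true -> (idx y < Nidx)%nat.
Proof.
  intros Hy Hg. destruct Nidx_bounds as [_ [HN _]].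
  pose proof (HA2 y Hy). fold (eta y) in H.
  assert (INR (idx y) < INR Nidx).
  { pose proof (idx_bounds (eta y) w (pos_INR _) Hw) as [Hb _]. fold (idx y) in Hb.
    assert (w * INR (idx y) < w * (t / w)) by (replace (w * (t / w)) with t by (field; lra); lra).
    apply Rmult_lt_reg_l in H0; lra. }
  apply INR_lt; auto.
Qed.

Lemma exists_class : exists c, In c Cs /\
   mus <= sumL (filter (fun y => good y && Nat.eqb (ci y) c) W) p.
Proof.
  pose proof t_pos. destruct Nidx_bounds as [HN1 [HN2 HN3]].
  assert (Hin : forall y, In y W -> In (cls y) Cs).
  { intros y Hy. unfold cls, Cs. apply in_seq. destruct (good y) eqn:E.
      - pose proof (idx_lt y Hy E). unfold ci, sb. destruct (Z.eqb (f y) 1); lia.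
      - lia. }
  assert (Hex := exch Nat.eqb (fun x y => Nat.eqb_eq x y) Cs W cls (fun y => if good y then p y else 0)
      (seq_NoDup _ _) Hin).
  assert (Hne : Cs <> nil) by (unfold Cs; destruct Nidx; [lia|simpl; discriminate]).
  destruct (pigeon Cs (fun c => sumL W (fun y => if Nat.eqb (cls y) c then (if good y then p y else 0) else 0)) (q * INR n / t) Hne) as [c [Hc Hm]].
  { rewrite Hex. apply p_mass. }
  exists c. split; auto.
  rewrite <- sumL_filter.
  eapply Rle_trans; [|eapply Rle_trans; [apply Hm|right]].
  - eapply Rle_trans. apply Hsupply. unfold Cs. rewrite length_seq, mult_INR. simpl INR.
    assert (0 <= q * INR n) by (apply Rmult_le_pos; auto; apply pos_INR).
    assert (0 <= q * INR n / t) by (apply le_div_r; lra).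
    assert (0 < t / w) by (apply Rdiv_lt_0_compat; lra).
    assert (0 < (1+1) * INR Nidx) by lra.
    apply frac_le; try lra. apply Rmult_le_compat_l; lra.
  - apply sumL_ext_in. intros y Hy. unfold cls. destruct (good y); simpl;
    [destruct (Nat.eqb (ci y) c); reflexivity | destruct c; reflexivity].
Qed.


Let mk y := (p y / 2, -2 * IZR (f y) * eta y).

Lemma sr_map L : sr (map (fun qd => 2 * fst qd) (map mk L)) = sumL L p.
Proof. induction L as [|y L IH]; [reflexivity|]. simpl. rewrite IH, sumL_cons. unfold mk; simpl; field. Qed.

Lemma core_bound : exists v mu, T/2 <= v /\ mus <= mu <= mus + 1 /\
  env_expect p f W (fun e => if Rleb (Rabs (Ssum Y n e)) t then 1 else 0) <= Bnd t v w mu.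
Proof.
  pose proof t_pos as Ht.
  destruct exists_class as [c [Hc Hmc]].
  set (Pc := fun y => good y && Nat.eqb (ci y) c) in *.
  set (FL := filter Pc W) in *.
  assert (Hg01 : forall y, In y FL -> 0 <= p y <= 1) by auto.
  destruct (greedy FL p Hg01 mus Hmc) as [k [Hk1 Hk2]].
  remember (firstn k FL) as Lb eqn:ELb.
  assert (HLb : forall y, In y Lb -> In y W /\ Pc y = true).
  { intros y Hy. rewrite ELb in Hy. apply In_firstn' in Hy. unfold FL in Hy. apply filter_In in Hy; auto. }
  assert (Hy0 : exists y0, In y0 Lb).
  { destruct Lb as [|y0 Lr]; [rewrite sumL_nil in Hk1; lra | exists y0; left; auto]. }
  destruct Hy0 as [y0 Hy0].
  destruct (HLb y0 Hy0) as [Hy0W Hy0P].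
  unfold Pc in Hy0P. apply andb_true_iff in Hy0P. destruct Hy0P as [Hg0 Hc0]. apply Nat.eqb_eq in Hc0.
  set (s := IZR (f y0)). set (v := w * INR (idx y0)).
  assert (Hbnd : forall y, In y Lb -> f y = f y0 /\ v <= eta y <= v + w).
  { intros y Hy. destruct (HLb y Hy) as [HyW HyP]. unfold Pc in HyP. apply andb_true_iff in HyP.
    destruct HyP as [Hg Hcy]. apply Nat.eqb_eq in Hcy.
    assert (Hsb : forall z, (sb z <= 1)%nat) by (intros z; unfold sb; destruct (Z.eqb (f z) 1); lia).
    assert (Hci : ci y = ci y0) by lia. unfold ci in Hci.
    pose proof (Hsb y); pose proof (Hsb y0).
    assert (Hidx : idx y = idx y0) by lia. assert (Hsbe : sb y = sb y0) by lia.
    split.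
    - unfold sb in Hsbe. destruct (Hf y) as [E1|E1]; destruct (Hf y0) as [E2|E2]; rewrite E1, E2 in *; auto; simpl in Hsbe; discriminate.
    - unfold v. rewrite <- Hidx. apply idx_bounds; [apply pos_INR|auto]. }
  assert (Hv : T / 2 <= v).
  { destruct (good_vis y0 Hg0) as [_ [HT0 _]]. destruct (Hbnd y0 Hy0) as [_ [_ H2]]. lra. }
  assert (Hs : s = 1 \/ s = -1) by (unfold s; destruct (Hf y0) as [E|E]; rewrite E; [left|right]; reflexivity).
  assert (Hband : bandL s v w (map mk Lb)).
  { intros qd Hqd. apply in_map_iff in Hqd. destruct Hqd as [y [<- Hy]].
    destruct (Hbnd y Hy) as [Hfy Hey]. unfold mk; simpl. pose proof (Hp y). split; [lra|].
    exists (eta y). split; auto. unfold s; rewrite Hfy; ring. }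
  assert (Hmu : 0 < sr (map (fun qd => 2 * fst qd) (map mk Lb))) by (rewrite sr_map; lra).
  pose proof (band_bound s v w t (map mk Lb) Hs ltac:(lra) ltac:(lra) ltac:(lra) Hband Hmu) as HB.
  rewrite sr_map in HB.
  exists v, (sumL Lb p). split; auto. split. { unfold Rmax in Hk2; destruct (Rle_dec mus 0); lra. }
  rewrite (env_ext p f W _ (fun e => Find t (0 + sumL W (fun y => IZR (e y) * eta y)))).
  2:{ intros e. unfold Find. rewrite Rplus_0_l. reflexivity. }
  rewrite (bridge p f eta (Find t) W (window_NoDup n) Hf 0).
  set (rest := skipn k FL ++ filter (fun x => negb (Pc x)) W).
  assert (Hperm : Permutation W (rest ++ Lb)).
  { eapply perm_trans. apply (filter_perm Pc W). fold FL.
    rewrite <- (firstn_skipn k FL) at 1. rewrite <- ELb.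
    rewrite <- app_assoc. apply Permutation_app_comm. }
  rewrite (EE_perm _ _ (Permutation_map mk Hperm)). fold mk. rewrite map_app, EE_app.
  apply EE_le_sup; auto.
  intros qd Hqd. apply in_map_iff in Hqd. destruct Hqd as [y [<- _]]. unfold mk; simpl. pose proof (Hp y). lra.
Qed.

End Core.

Lemma div_mono_den x v0 v : 0 <= x -> 0 < v0 -> v0 <= v -> x / v <= x / v0.
Proof. intros Hx H0 H1. unfold Rdiv. apply Rmult_le_compat_l; auto. apply Rinv_le_contravar; lra. Qed.

Lemma bnd_num a u v mu : 0 < a -> 1 <= u -> a / u^4 / 2 <= v -> u^14 <= mu <= u^14 + 1 ->
  Bnd (a * u^2) v (a / u^14) mu <= 100 / u.
Proof.
  intros Ha Hu Hv Hmu.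
  assert (Hp : forall k, 0 < u ^ k) by (intros; apply pow_lt; lra).
  assert (Hp1 : forall k, 1 <= u ^ k) by (intros; rewrite <- (pow1 k); apply pow_incr; lra).
  assert (Hle : forall m k, (m <= k)%nat -> u ^ m <= u ^ k) by (intros; apply Rle_pow; auto).
  set (v0 := a / u^4 / 2) in *.
  assert (Hv0 : 0 < v0) by (unfold v0; pose proof (Hp 4%nat); apply Rdiv_lt_0_compat; [apply Rdiv_lt_0_compat|]; lra).
  assert (Hmu0 : 0 < mu) by (pose proof (Hp 14%nat); lra).
  assert (HX : a * u^2 / v <= 2 * u^6).
  { apply Rle_trans with (a * u^2 / v0). apply div_mono_den; auto. pose proof (Hp 2%nat); nra.
    right. unfold v0. field. split; [|lra]. pose proof (Hp 1%nat); simpl in *; lra. }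
  assert (HZ : a / u^14 / v <= 2 / u^10).
  { apply Rle_trans with (a / u^14 / v0). apply div_mono_den; auto. apply Rlt_le, Rdiv_lt_0_compat; auto.
    right. unfold v0. field. split; [|lra]. pose proof (Hp 1%nat); simpl in *; lra. }
  assert (HWM : a / u^14 * mu / v <= 4 * u^4).
  { apply Rle_trans with (a / u^14 * mu / v0). apply div_mono_den; auto. apply Rmult_le_pos; [apply Rlt_le, Rdiv_lt_0_compat; auto|lra].
    eapply Rle_trans. apply Rmult_le_compat_r. apply Rlt_le, Rinv_0_lt_compat; auto. apply Rmult_le_compat_l. apply Rlt_le, Rdiv_lt_0_compat; auto. apply (proj2 Hmu).
    unfold v0. replace (a / u ^ 14 * (u ^ 14 + 1) * / (a / u ^ 4 / 2)) with (2 * u^4 + 2 * u^4 / u^14)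
      by (field; split; [|lra]; pose proof (Hp 1%nat); simpl in *; lra).
    assert (u^4 / u^14 <= u^4) by (apply div_le_l'; [auto|]; pose proof (Hp1 14%nat); pose proof (Hp 4%nat); nra).
    lra. }
  assert (Hsq : sqrt (4 / mu) <= 2 / u^7).
  { rewrite <- (sqrt_square (2 / u^7)) by (apply Rlt_le, Rdiv_lt_0_compat; auto; lra).
    apply sqrt_le_1_alt. replace (2 / u ^ 7 * (2 / u ^ 7)) with (4 / u^14) by (field; pose proof (Hp 1%nat); simpl in *; lra).
    apply div_mono_den; auto; lra. }
  unfold Bnd. assert (Hvne : v <> 0) by (apply Rgt_not_eq; lra).
  replace ((a * u ^ 2 + 2 * (a / u ^ 14) * mu) / v + 1) with (a * u^2 / v + 2 * (a / u^14 * mu / v) + 1) by (field; split; auto; pose proof (Hp 14%nat); lra).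
  replace (8 * (a * u ^ 2 / v + 1 + a / u ^ 14 * mu / v) / mu) with (8 * (a * u ^ 2 / v + 1 + a / u ^ 14 * mu / v) * / mu) by reflexivity.
  replace (4 * (a / u ^ 14) / v) with (4 * (a / u ^ 14 / v)) by (field; split; auto; pose proof (Hp 14%nat); lra).
  set (X := a * u ^ 2 / v) in *. set (WM := a / u ^ 14 * mu / v) in *. set (Z := a / u ^ 14 / v) in *.
  assert (0 <= X) by (unfold X; apply le_div_r; [lra|]; pose proof (Hp 2%nat); nra).
  assert (0 <= WM) by (unfold WM; apply le_div_r; [lra|]; rewrite Rmult_0_l; apply Rmult_le_pos; [apply Rlt_le, Rdiv_lt_0_compat; auto|lra]).
  assert (/ mu <= / u^14) by (apply Rinv_le_contravar; auto; lra).
  assert (0 <= sqrt (4 / mu)) by apply sqrt_pos.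
  assert (T1 : (X + 2 * WM + 1) * sqrt (4 / mu) <= (2 * u^6 + 8 * u^4 + 1) * (2 / u^7)) by (apply Rmult_le_compat; lra).
  assert (T2 : 8 * (X + 1 + WM) * / mu <= 8 * (2 * u^6 + 1 + 4 * u^4) * / u^14).
  { apply Rmult_le_compat; try lra. apply Rlt_le, Rinv_0_lt_compat; auto. }
  assert (T3 : 4 * Z <= 4 * (2 / u^10)) by lra.
  assert (E : (2 * u^6 + 8 * u^4 + 1) * (2 / u^7) + 8 * (2 * u^6 + 1 + 4 * u^4) * / u^14 + 4 * (2 / u^10)
     = (4 * u^13 + 16 * u^11 + 2 * u^7 + 16 * u^6 + 8 + 32 * u^4 + 8 * u^4) / u^14)
     by (field; pose proof (Hp 1%nat); simpl in *; lra).
  assert (F : (4 * u^13 + 16 * u^11 + 2 * u^7 + 16 * u^6 + 8 + 32 * u^4 + 8 * u^4) / u^14 <= 100 / u).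
  { apply frac_le; auto. lra.
    pose proof (Hle 11%nat 13%nat ltac:(lia)). pose proof (Hle 7%nat 13%nat ltac:(lia)).
    pose proof (Hle 6%nat 13%nat ltac:(lia)). pose proof (Hle 4%nat 13%nat ltac:(lia)). pose proof (Hp1 13%nat).
    replace (u ^ 14) with (u ^ 13 * u) by (simpl; ring).
    assert (0 <= u ^ 13 * u) by (pose proof (Hp 13%nat); nra). nra. }
  lra.
Qed.

Lemma ev_large g K : 0 < g -> exists N, forall n, (N <= n)%nat -> K <= Rpower (INR n) g.
Proof.
  intros Hg. set (K' := Rmax K 1). assert (HK' : 1 <= K') by apply Rmax_r.
  set (z := Rpower K' (/ g)). assert (Hz : 0 < z) by (unfold z, Rpower; apply exp_pos).
  destruct (archimed z) as [H1 _].
  exists (Z.to_nat (up z)). intros n Hn.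
  assert (Hup : (0 < up z)%Z) by (apply lt_IZR; lra).
  assert (z <= INR n).
  { apply Rle_trans with (INR (Z.to_nat (up z))). rewrite INR_Z_to_nat by lia. lra. apply le_INR; auto. }
  apply Rle_trans with K'. apply Rmax_l.
  replace K' with (Rpower z g).
  - apply Rle_Rpower_l; lra.
  - unfold z. rewrite Rpower_mult. rewrite Rinv_l by lra. apply Rpower_1. lra.
Qed.

Lemma upow x c k : 0 < x -> Rpower x c ^ k = Rpower x (INR k * c).
Proof. intros Hx. rewrite <- Rpower_pow by (unfold Rpower; apply exp_pos).
  rewrite Rpower_mult. f_equal; ring. Qed.

Lemma Rltb_true x y : Rltb x y = true -> x < y.
Proof. unfold Rltb; destruct (Rlt_dec x y); auto; discriminate. Qed.

Lemma Rpower_pos x y : 0 < Rpower x y.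
Proof. unfold Rpower; apply exp_pos. Qed.

Theorem proposition7 :
  forall (beta : R), beta < 1 ->
  forall (Q : Z) (f : Z -> Z) (c0 : R) (p : Z -> R),
    (2 <= Q)%Z -> Z.Even Q ->
    (forall y, f y = 1%Z \/ f y = (-1)%Z) ->
    (forall y, f (y + Q)%Z = f y) ->
    fold_right Z.add 0%Z (map f (map (fun i => Z.of_nat i + 1)%Z (seq 0 (Z.to_nat Q)))) = 0%Z ->
    0 < c0 ->
    (forall y, 0 <= p y <= 1) ->
    (exists Y0 : Z, forall y : Z, (Y0 <= Z.abs y)%Z ->
        p y = c0 * Rpower (IZR (Z.abs y)) (- beta)) ->
  exists d1 d2 d3 dbeta C : R,
    0 < d1 /\ 0 < d2 /\ 0 < d3 /\ 0 < dbeta /\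
    exists N : nat, forall n : nat, (N <= n)%nat ->
      forall Y : nat -> Z, nn_path Y ->
        cond_prob_AnBn p f Y n d1 d2 d3 <= C * Rpower (INR n) (- dbeta).
Proof.
  intros beta Hbeta Q f c0 p _ _ Hf _ _ Hc0 Hp [Y0 HY0].
  set (b := Rmax beta 0).
  assert (Hb : 0 <= b < 1) by (unfold b, Rmax; destruct (Rle_dec beta 0); lra).
  set (e := (1 - b) / 40).
  assert (He : 0 < e) by (unfold e; lra).
  set (Y0' := Z.max Y0 1).
  assert (HY0' : 1 <= IZR Y0') by (apply IZR_le; unfold Y0'; lia).
  exists e, e, e, (e/2), 100.
  split; [lra|split; [lra|split; [lra|split; [lra|]]]].
  destruct (ev_large (e/2) 2 ltac:(lra)) as [N1 HN1].
  destruct (ev_large (/2 - e) (4 * (2 * IZR Y0' + 1) + 4) ltac:(unfold e; lra)) as [N2 HN2].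
  destruct (ev_large (e * (4 - b)) (4 / c0) ltac:(apply Rmult_lt_0_compat; lra)) as [N3 HN3].
  exists (Nat.max 1 (Nat.max N1 (Nat.max N2 N3))).
  intros n Hn Y HY.
  assert (Hn1 : (1 <= n)%nat) by lia.
  set (x := INR n). assert (Hx : 1 <= x) by (unfold x; apply (le_INR 1); lia).
  unfold cond_prob_AnBn.
  set (t := Rpower x (/2 + e)).
  assert (Hfin : 0 < 100 * Rpower x (- (e/2))) by (pose proof (Rpower_pos x (-(e/2))); lra).
  destruct (A_n Y n e e) eqn:HA; [|lra].
  rewrite Rmult_1_l.
  unfold A_n in HA. apply andb_true_iff in HA. destruct HA as [HA1 HA2].
  unfold A_n1 in HA1. unfold A_n2 in HA2. rewrite forallb_forall in HA1, HA2.
  assert (HA1' : forall k, (k <= 2*n)%nat -> IZR (Z.abs (Y k)) < t).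
  { intros k Hk. apply Rltb_true, HA1, in_seq. lia. }
  assert (HA2' : forall y, In y (window n) -> INR (eta2n Y n y) < t).
  { intros y Hy. apply Rltb_true, HA2; auto. }
  set (a := Rpower x (/2)). set (u := Rpower x (e/2)).
  assert (Hx0 : 0 < x) by lra.
  assert (Ha : 0 < a) by apply Rpower_pos. assert (Hu2 : 2 <= u) by (apply HN1; lia).
  assert (Hp' : forall k, 0 < u ^ k) by (intros; apply pow_lt; lra).
  assert (Ht : t = a * u^2).
  { unfold t, a, u. rewrite upow by auto. rewrite <- Rpower_plus. f_equal. simpl. field. }
  assert (Hxa : x = a * a).
  { unfold a. rewrite <- Rpower_plus. replace (/2 + /2) with 1 by field. rewrite Rpower_1; auto. }
  set (T := a / u^4). set (w := a / u^14). set (mus := u^14).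
  set (q := c0 * Rpower t (- b)).
  assert (Htpos : 0 < t) by apply Rpower_pos.
  assert (Hq : forall y, (Y0' <= Z.abs y)%Z -> IZR (Z.abs y) < t -> q <= p y).
  { intros y Hy1 Hy2. rewrite HY0 by lia. unfold q. apply Rmult_le_compat_l; [lra|].
    assert (Hy1' : 1 <= IZR (Z.abs y)) by (apply IZR_le; lia).
    unfold b, Rmax. destruct (Rle_dec beta 0).
    - replace (- 0) with 0 by ring. rewrite Rpower_O by lra.
      rewrite <- (Rpower_O (IZR (Z.abs y))) at 1 by lra. apply Rle_Rpower; lra.
    - rewrite !Rpower_Ropp. apply Rinv_le_contravar. apply Rpower_pos.
      apply Rle_Rpower_l; lra. }
  assert (Hg : 4 * (2 * IZR Y0' + 1) + 4 <= a / u^2).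
  { replace (a / u^2) with (Rpower x (/2 - e)). apply HN2; lia.
    unfold a, u. rewrite upow by auto. unfold Rminus. rewrite Rpower_plus, Rpower_Ropp. simpl. field_simplify_eq.
    replace ((1 + 1) * (e / 2)) with e by field. reflexivity. split; apply Rgt_not_eq, Rpower_pos. }
  assert (Hz : 4 / c0 <= Rpower t (- b) * a / u^32).
  { replace (Rpower t (- b) * a / u^32) with (Rpower x (e * (4 - b))). apply HN3; lia.
    unfold t, a, u. rewrite upow by auto. rewrite Rpower_mult, <- Rpower_plus.
    replace (e * (4 - b)) with ((/ 2 + e) * - b + / 2 - INR 32 * (e / 2)).
    - unfold Rminus. rewrite Rpower_plus, Rpower_Ropp. field. apply Rgt_not_eq, Rpower_pos.
    - unfold e. simpl INR. field. }
  destruct (core_bound n Y p f Y0' q t T w mus HY Hn1 Hf Hp HA1' HA2' Hq) as [v [mu [Hv [Hmu Hbnd]]]].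
  - unfold q. apply Rmult_le_pos; [lra| apply Rlt_le, Rpower_pos].
  - unfold w. apply Rdiv_lt_0_compat; auto.
  - unfold w, T. replace (a / u ^ 4 / 2) with ((a / 2) / u^4) by (field; pose proof (Hp' 4%nat); lra).
    apply frac_le; auto. replace (u^14) with (u^4 * u^10) by (rewrite <- pow_add; reflexivity).
    assert (u ^ 1 <= u ^ 10) by (apply Rle_pow; [lra|lia]). simpl pow in H at 1.
    pose proof (Hp' 4%nat). assert (0 <= a * u^4 * (u^10 / 2 - 1)) by (apply Rmult_le_pos; nra).
    nra.
  - unfold mus; auto.
  - lra.
  - fold x. set (G := a / u^2) in *. assert (HaG : a = G * u^2) by (unfold G; field; pose proof (Hp' 2%nat); lra).
    assert (HG0 : 0 < G) by lra.
    unfold T. rewrite Hxa, Ht, HaG.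
    replace (G * u ^ 2 / u ^ 4) with (G / u^2) by (field; lra).
    set (r := / u^2). assert (Hr : r * u^2 = 1) by (unfold r; field; lra).
    assert (Hr0 : 0 < r) by (unfold r; apply Rinv_0_lt_compat; auto).
    assert (Hu4 : 4 <= u^2) by (simpl; nra).
    assert (Hr1 : r <= 1) by nra.
    replace (G / u^2) with (G * r) by reflexivity.
    set (s2 := u^2) in *. set (K := 2 * IZR Y0' + 1) in *.
    assert (0 <= K) by (unfold K; lra).
    assert (HK : s2 * s2 * G * K <= G * G * s2 * s2 / 4) by (assert (0 <= s2 * s2 * G) by nra; nra).
    assert (H2 : 2 * G * G * s2 <= G * G * s2 * s2 / 2) by (assert (0 <= G * G * s2) by nra; nra).
    assert (H3 : G * r <= G * G * s2 * s2 / 4) by (assert (1 <= s2 * s2) by nra; assert (4 <= G) by lra; nra).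
    replace (G * s2 * s2 * (2 * IZR Y0' + 1)) with (s2 * s2 * G * K) by (unfold K; ring).
    replace (G * s2 * (G * s2)) with (G * G * s2 * s2) by ring.
    replace (G * r * (2 * (G * s2 * s2) + 1)) with (2 * G * G * s2 * (r * s2) + G * r) by ring.
    rewrite Hr. nra.
  - unfold w, q, mus. fold x. set (Rt := Rpower t (- b)) in *. rewrite Ht.
    assert (HRt : 0 < Rt) by apply Rpower_pos.
    replace (c0 * Rt * x / (a * u ^ 2) / (2 * (a * u ^ 2 / (a / u ^ 14) + 1))) with
      (c0 * Rt * a / (u^2 * (2 * (u^16 + 1)))).
    2:{ rewrite Hxa. field. pose proof (Hp' 1%nat); pose proof (Hp' 14%nat). simpl in *. repeat split; nra. }
    apply le_div_r. pose proof (Hp' 2%nat). pose proof (Hp' 16%nat). apply Rmult_lt_0_compat; lra.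
    assert (Hz' : 4 * u^32 <= c0 * Rt * a).
    { apply (Rmult_le_compat_l c0) in Hz; [|lra].
      replace (c0 * (4 / c0)) with 4 in Hz by (field; lra).
      replace (c0 * (Rt * a / u ^ 32)) with (c0 * Rt * a / u^32) in Hz by (field; pose proof (Hp' 32%nat); lra).
      apply (Rmult_le_compat_r (u^32)) in Hz; [|pose proof (Hp' 32%nat); lra].
      replace (c0 * Rt * a / u ^ 32 * u ^ 32) with (c0 * Rt * a) in Hz by (field; pose proof (Hp' 32%nat); lra). lra. }
    assert (u ^ 16 <= u ^ 32) by (apply Rle_pow; lia || lra).
    replace (u ^ 14 * (u ^ 2 * (2 * (u ^ 16 + 1)))) with (2 * u^32 + 2 * u^16).
    + lra.
    + replace (u^32) with (u^14 * u^2 * u^16) by (rewrite <- !pow_add; reflexivity).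
      replace (u^16) with (u^14 * u^2) at 2 by (rewrite <- !pow_add; reflexivity). ring.
  - eapply Rle_trans. apply Hbnd. rewrite Ht. unfold w.
    eapply Rle_trans. apply bnd_num; auto; lra.
    rewrite Rpower_Ropp. fold u. right. field. lra.
Qed.
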